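(* Let $E_0>0$ and let $\phi$ satisfy the standing assumptions below with $n\le 3$. Define, for $V\in(0,E_0)$, $\kappa(V)=\frac{\varrho+p}{\varrho+3p}\cdot\frac{\varrho'(V)}{p'(V)}$ and $I(V)=\frac15\kappa^2+2\kappa+(\varrho+p)\frac{\kappa'(V)}{p'(V)}$ (i.e. $I=\frac15\kappa^2+2\kappa+(\varrho+p)\frac{d\kappa}{dp}$ with $\frac{d\varrho}{dp}=\varrho'/p'$, $\frac{d\kappa}{dp}=\kappa'/p'$). Then $I(V)\to-\infty$ as $V\to E_0^-$; in particular there is $V_0<E_0$ such that $I(V)\le0$ for all $V\in[V_0,E_0)$, i.e. $I\le 0$ for all $0<p\le p_0:=p(V_0)$.
   Context: Standing assumptions on $\phi:(-\infty,1]\to\mathbb R_+$: $\phi(x)=0$ for $x<0$, $\phi$ analytic on $[0,1]$, and there is $n\in\{0,1,2,\dots\}$ with $\phi'(0)=\dots=\phi^{(n-1)}(0)=0$, $\phi^{(n)}(0)>0$. For $V\in(0,E_0]$: $\varrho(V)=\frac{4\pi}{V^3}\int_V^{E_0}\phi(1-E/E_0)E^2\sqrt{(E/V)^2-1}\,dE$ and $p(V)=\frac{4\pi}{3V}\int_V^{E_0}\phi(1-E/E_0)[(E/V)^2-1]^{3/2}dE$; primes denote derivatives in $V$. *)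

(* Defs.v *)
From Stdlib Require Import Reals Lra Lia ClassicalEpsilon.
Open Scope R_scope.

(* Total Riemann integral: the value of RiemannInt when f is Riemann
   integrable on [a,b] (this value is independent of the proof), junk otherwise. *)
Definition RInt (f : R -> R) (a b : R) : R :=
  epsilon (inhabits 0)
    (fun l => exists pr : Riemann_integrable f a b, RiemannInt pr = l).

(* Total derivative: the derivative of f at x when it exists, junk otherwise. *)
Definition Deriv (f : R -> R) (x : R) : R :=
  epsilon (inhabits 0) (fun l => derivable_pt_lim f x l).

Definition RDeriv (f : R -> R) (x : R) : R :=
  epsilon (inhabits 0) (fun l =>
    forall eps, 0 < eps -> exists d, 0 < d /\
      forall h, 0 < h < d -> Rabs ((f (x + h) - f x) / h - l) < eps).

Fixpoint RDerivn (k : nat) (f : R -> R) : R -> R :=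
  match k with
  | O => f
  | S k' => RDeriv (RDerivn k' f)
  end.

Definition analytic_on_01 (phi : R -> R) : Prop :=
  forall x0, 0 <= x0 <= 1 ->
    exists (a : nat -> R) (r : R), 0 < r /\
      forall x, 0 <= x <= 1 -> Rabs (x - x0) < r ->
        infinite_sum (fun k => a k * (x - x0) ^ k) (phi x).

Definition standing_phi (phi : R -> R) (n : nat) : Prop :=
  (forall x, x <= 1 -> 0 <= phi x) /\
  (forall x, x < 0 -> phi x = 0) /\
  analytic_on_01 phi /\
  (forall k, (1 <= k)%nat -> (k < n)%nat -> RDerivn k phi 0 = 0) /\
  0 < RDerivn n phi 0.

Definition rho (phi : R -> R) (E0 V : R) : R :=
  4 * PI / V ^ 3 *
  RInt (fun E => phi (1 - E / E0) * E ^ 2 * sqrt ((E / V) ^ 2 - 1)) V E0.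

(* [(E/V)^2-1]^{3/2} written as sqrt(...)^3 (argument is >= 0 on [V,E0]) *)
Definition pr (phi : R -> R) (E0 V : R) : R :=
  4 * PI / (3 * V) *
  RInt (fun E => phi (1 - E / E0) * (sqrt ((E / V) ^ 2 - 1)) ^ 3) V E0.

Definition kappa (phi : R -> R) (E0 V : R) : R :=
  (rho phi E0 V + pr phi E0 V) / (rho phi E0 V + 3 * pr phi E0 V) *
  (Deriv (rho phi E0) V / Deriv (pr phi E0) V).

Definition Ifun (phi : R -> R) (E0 V : R) : R :=
  / 5 * (kappa phi E0 V) ^ 2 + 2 * kappa phi E0 V +
  (rho phi E0 V + pr phi E0 V) * (Deriv (kappa phi E0) V / Deriv (pr phi E0) V).

(* Main.v *)
Require Import Defs.
From Stdlib Require Import Reals Lra Lia ClassicalEpsilon.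
From Coquelicot Require Import Coquelicot.
Open Scope R_scope.

Lemma is_derive_eq (f : R -> R) x l l' : is_derive f x l -> l = l' -> is_derive f x l'.
Proof. intros H ->; exact H. Qed.

Lemma isd_const (a x : R) : is_derive (fun _ : R => a) x 0.
Proof. auto_derive; auto. Qed.
Lemma isd_id (x : R) : is_derive (fun t : R => t) x 1.
Proof. auto_derive; auto. Qed.

Fixpoint Sm (k : nat) (d : R) (h : R -> R -> R) : Prop :=
  (forall s t, -d < s < d -> 0 <= t <= 1 -> continuity_2d_pt h s t) /\
  match k with
  | O => True
  | S k' => exists h', (forall s t, -d < s < d -> -1/2 < t < 3/2 ->
              is_derive (fun z => h z t) s (h' s t)) /\ Sm k' d h'
  end.

Lemma Sm_cont k d h : Sm k d h -> forall s t, -d < s < d -> 0 <= t <= 1 -> continuity_2d_pt h s t.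
Proof. destruct k; simpl; tauto. Qed.

Lemma Sm_weak k : forall d h, Sm (S k) d h -> Sm k d h.
Proof.
  induction k; intros d h [Hc [h' [Hd Hs]]]; simpl.
  - split; auto.
  - split; auto. exists h'; split; auto.
Qed.

Lemma Sm_plus k : forall d f g, Sm k d f -> Sm k d g -> Sm k d (fun s t => f s t + g s t).
Proof.
  induction k; intros d f g Hf Hg.
  - simpl in *. split; auto. intros. apply continuity_2d_pt_plus; firstorder.
  - destruct Hf as [Cf [f' [Df Sf]]], Hg as [Cg [g' [Dg Sg]]].
    split. { intros. apply continuity_2d_pt_plus; auto. }
    exists (fun s t => f' s t + g' s t). split; auto.
    intros. apply (is_derive_plus (fun z => f z t) (fun z => g z t)); auto.
Qed.

Lemma Sm_mult k : forall d f g, Sm k d f -> Sm k d g -> Sm k d (fun s t => f s t * g s t).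
Proof.
  induction k; intros d f g Hf Hg.
  - simpl in *. split; auto. intros. apply continuity_2d_pt_mult; firstorder.
  - pose proof (Sm_weak _ _ _ Hf) as Wf. pose proof (Sm_weak _ _ _ Hg) as Wg.
    destruct Hf as [Cf [f' [Df Sf]]], Hg as [Cg [g' [Dg Sg]]].
    split. { intros. apply continuity_2d_pt_mult; auto. }
    exists (fun s t => f' s t * g s t + f s t * g' s t). split.
    + intros. eapply is_derive_eq.
      apply (is_derive_mult (fun z => f z t) (fun z => g z t)); auto.
      intros; apply Rmult_comm. reflexivity.
    + apply Sm_plus; apply IHk; auto.
Qed.

Lemma cont2_const (c : R -> R) s t : continuity_pt c t -> continuity_2d_pt (fun _ v => c v) s t.
Proof. intros H. apply (continuity_1d_2d_pt_comp c (fun _ v => v)); auto. apply continuity_2d_pt_id2. Qed.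

Lemma Sm_const k : forall d (c : R -> R), (forall t, 0 <= t <= 1 -> continuity_pt c t) ->
  Sm k d (fun _ t => c t).
Proof.
  induction k; intros d c Hc.
  - split; auto. intros. apply cont2_const; auto.
  - split. { intros. apply cont2_const; auto. }
    exists (fun _ _ => 0). split.
    + intros. apply isd_const.
    + apply (IHk d (fun _ => 0)). intros; apply continuity_pt_const. intros x y; auto.
Qed.

Definition Fam (F : nat -> R -> R) lo hi :=
  forall j x, lo < x < hi -> is_derive (F j) x (F (S j) x).

Lemma Sm_comp k : forall d F c lo hi, Fam F lo hi ->
  (forall t, 0 <= t <= 1 -> continuity_pt c t) ->
  (forall s t, -d < s < d -> -1/2 < t < 3/2 -> lo < s * c t < hi) ->
  Sm k d (fun s t => F O (s * c t)).
Proof.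
  assert (Hcont : forall d F c lo hi, Fam F lo hi ->
    (forall t, 0 <= t <= 1 -> continuity_pt c t) ->
    (forall s t, -d < s < d -> -1/2 < t < 3/2 -> lo < s * c t < hi) ->
    forall s t, -d < s < d -> 0 <= t <= 1 -> continuity_2d_pt (fun s t => F O (s * c t)) s t).
  { intros d F c lo hi HF Hc Hd s t Hs Ht.
    apply (continuity_1d_2d_pt_comp (F O) (fun u v => u * c v)).
    - apply continuity_pt_filterlim.
      apply (ex_derive_continuous (K:=R_AbsRing) (V:=R_NormedModule) (F O)).
      eexists. apply HF. apply Hd; auto; lra.
    - apply continuity_2d_pt_mult. apply continuity_2d_pt_id1. apply cont2_const; auto. }
  induction k; intros d F c lo hi HF Hc Hd.
  - split; auto. intros; eapply Hcont; eauto.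
  - split. { intros; eapply Hcont; eauto. }
    exists (fun s t => c t * F 1%nat (s * c t)). split.
    + intros s t Hs Ht. eapply is_derive_eq.
      apply (is_derive_comp (F O) (fun z => z * c t)).
      apply HF; auto.
      eapply is_derive_eq. apply (is_derive_mult (fun z => z) (fun _ => c t)).
      apply isd_id. apply isd_const. intros; apply Rmult_comm. reflexivity.
      simpl. unfold scal, plus, mult, one, zero; simpl. unfold mult; simpl. ring.
    + apply Sm_mult. apply Sm_const; auto.
      apply (IHk d (fun j => F (S j)) c lo hi); auto.
      intros j x Hx. apply HF; auto.
Qed.

Lemma loc_int d s : -d < s < d -> locally s (fun y => -d < y < d).
Proof. intros H. apply (locally_interval _ s (-d) d); simpl; try lra. intros; lra. Qed.

Lemma cont2_cont2 (h : R -> R -> R) y t : continuity_2d_pt h y t -> continuous (h y) t.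
Proof.
  intros H. apply continuity_pt_filterlim.
  intros eps Heps. destruct (H (mkposreal eps Heps)) as [del Hdel].
  exists del. split; [apply cond_pos|]. intros x [_ Hx]. simpl in *.
  unfold R_dist in *. apply Hdel. rewrite Rminus_eq_0, Rabs_R0. apply cond_pos. exact Hx.
Qed.

Lemma Sm_exRInt k d h y : Sm k d h -> -d < y < d -> ex_RInt (h y) 0 1.
Proof.
  intros HS Hy. apply (ex_RInt_continuous (V:=R_CompleteNormedModule)). intros z Hz.
  rewrite Rmin_left in Hz by lra; rewrite Rmax_right in Hz by lra.
  apply cont2_cont2. eapply Sm_cont; eauto.
Qed.

Lemma Sm_int k d h : Sm (S k) d h -> exists h', Sm k d h' /\
  forall s, -d < s < d -> is_derive (fun z => RInt (h z) 0 1) s (RInt (h' s) 0 1).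
Proof.
  intros HS. pose proof HS as [Hc [h' [Hd Hs]]]. exists h'. split; auto.
  intros s Hsd.
  assert (HD : forall u v, -d < u < d -> -1/2 < v < 3/2 -> Derive (fun z => h z v) u = h' u v).
  { intros. apply is_derive_unique. apply Hd; auto. }
  eapply is_derive_eq.
  - apply (is_derive_RInt_param (fun z t => h z t) 0 1 s).
    + apply (filter_imp (fun y => -d < y < d)); [|apply loc_int; auto].
      intros y Hy t Ht. rewrite Rmin_left in Ht by lra; rewrite Rmax_right in Ht by lra.
      eexists. apply Hd; auto; lra.
    + intros t Ht. rewrite Rmin_left in Ht by lra; rewrite Rmax_right in Ht by lra.
      apply continuity_2d_pt_ext_loc with (f := h').
      * assert (Hp : 0 < Rmin (Rmin (s + d) (d - s)) (1/2)).
        { apply Rmin_pos; [apply Rmin_pos|]; lra. }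
        exists (mkposreal _ Hp). intros u v Hu Hv. simpl in *.
        symmetry. apply HD.
        -- apply Rabs_def2 in Hu. destruct Hu.
           pose proof (Rmin_l (Rmin (s + d) (d - s)) (1/2)).
           pose proof (Rmin_l (s + d) (d - s)). pose proof (Rmin_r (s + d) (d - s)). lra.
        -- apply Rabs_def2 in Hv. destruct Hv.
           pose proof (Rmin_r (Rmin (s + d) (d - s)) (1/2)). lra.
      * apply (Sm_cont _ _ _ Hs); auto.
    + apply (filter_imp (fun y => -d < y < d)); [|apply loc_int; auto].
      intros y Hy. apply (Sm_exRInt _ _ _ _ HS Hy).
  - apply RInt_ext. intros x Hx.
    rewrite Rmin_left in Hx by lra; rewrite Rmax_right in Hx by lra.
    apply HD; auto; lra.
Qed.

Fixpoint PSd (j : nat) (a : nat -> R) : nat -> R :=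
  match j with O => a | S j' => PS_derive (PSd j' a) end.

Lemma CV_PSd j a : CV_radius (PSd j a) = CV_radius a.
Proof. induction j; simpl; auto. rewrite CV_radius_derive; auto. Qed.

Definition Fps (a : nat -> R) (j : nat) (x : R) := PSeries (PSd j a) x.

Lemma Fam_ps a (rho : R) : Rbar_le rho (CV_radius a) -> Fam (Fps a) (-rho) rho.
Proof.
  intros Hr j x Hx. unfold Fps. simpl. apply is_derive_PSeries.
  rewrite CV_PSd. eapply Rbar_lt_le_trans; [|exact Hr]. simpl. apply Rabs_def1; lra.
Qed.

Fixpoint cf (q : R) (j : nat) : R :=
  match j with O => 1 | S j' => cf q j' * (q - INR j') end.

Definition Frp (B q : R) (j : nat) (x : R) := cf q j * Rpower (B + x) (q - INR j).

Lemma Frp0 B q x : Frp B q 0 x = Rpower (B + x) q.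
Proof. unfold Frp; simpl. rewrite Rminus_0_r; ring. Qed.

Lemma Fam_rp B q : 0 < B -> Fam (Frp B q) (-B) B.
Proof.
  intros HB j x Hx. unfold Frp.
  eapply is_derive_eq.
  apply is_derive_scal with (k := cf q j) (f := fun x => Rpower (B + x) (q - INR j)).
  apply (is_derive_comp (fun y => Rpower y (q - INR j)) (fun x => B + x)).
  apply is_derive_Reals. apply derivable_pt_lim_power. lra.
  eapply is_derive_eq. apply (is_derive_plus (fun _ => B) (fun x => x)).
  apply isd_const. apply isd_id. reflexivity.
  unfold scal, plus; simpl; unfold mult; simpl.
  replace (match j with | 0%nat => 1 | S _ => INR j + 1 end) with (INR (S j)) by reflexivity.
  rewrite S_INR. replace (q - (INR j + 1)) with (q - INR j - 1) by ring. ring.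
Qed.

Definition RDprop (f : R -> R) x l := forall eps, 0 < eps -> exists d, 0 < d /\
      forall h, 0 < h < d -> Rabs ((f (x + h) - f x) / h - l) < eps.

Lemma RDprop_unique f x l1 l2 : RDprop f x l1 -> RDprop f x l2 -> l1 = l2.
Proof.
  intros H1 H2. destruct (Req_dec l1 l2) as [|Hne]; auto. exfalso.
  assert (He : 0 < Rabs (l1 - l2) / 2).
  { assert (l1 - l2 <> 0) by lra. apply Rabs_pos_lt in H. lra. }

  destruct (H1 _ He) as [d1 [Hd1 P1]]. destruct (H2 _ He) as [d2 [Hd2 P2]].
  set (h := Rmin d1 d2 / 2).
  assert (Hh : 0 < h < d1 /\ 0 < h < d2).
  { unfold h. pose proof (Rmin_l d1 d2). pose proof (Rmin_r d1 d2).
    assert (0 < Rmin d1 d2) by (apply Rmin_pos; auto). lra. }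
  specialize (P1 h (proj1 Hh)). specialize (P2 h (proj2 Hh)).
  set (z := (f (x + h) - f x) / h) in *.
  assert (Rabs (l1 - l2) <= Rabs (z - l1) + Rabs (z - l2)).
  { replace (l1 - l2) with (-(z - l1) + (z - l2)) by ring.
    eapply Rle_trans. apply Rabs_triang. rewrite Rabs_Ropp. lra. }
  lra.
Qed.

Lemma RDeriv_eq f x l : RDprop f x l -> RDeriv f x = l.
Proof.
  intros H. unfold RDeriv.
  assert (Hex : exists l, RDprop f x l) by (exists l; auto).
  pose proof (epsilon_spec (inhabits 0) (RDprop f x) Hex) as Hs.
  apply (RDprop_unique f x); auto.
Qed.

Lemma RDprop_of_derive f F x l r : 0 <= x < r ->
  (forall y, 0 <= y < r -> f y = F y) -> is_derive F x l -> RDprop f x l.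
Proof.
  intros Hx Hf HD eps Heps. apply is_derive_Reals in HD.
  destruct (HD eps Heps) as [del Hdel].
  exists (Rmin del (r - x)). split. { apply Rmin_pos. apply cond_pos. lra. }
  intros h Hh. pose proof (Rmin_l del (r - x)). pose proof (Rmin_r del (r - x)).
  rewrite !Hf by lra. apply Hdel. lra. rewrite Rabs_right; lra.
Qed.

Lemma RDerivn_ps phi a (r : R) : Rbar_lt r (CV_radius a) ->
  (forall x, 0 <= x < r -> phi x = PSeries a x) ->
  forall k x, 0 <= x < r -> RDerivn k phi x = PSeries (PSd k a) x.
Proof.
  intros Hr Hphi k. induction k; intros x Hx; simpl; auto.
  apply RDeriv_eq. apply (RDprop_of_derive _ (PSeries (PSd k a)) x _ r); auto.
  apply is_derive_PSeries. rewrite CV_PSd. eapply Rbar_lt_trans; [|exact Hr].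
  simpl. rewrite Rabs_right; lra.
Qed.

Lemma bounded_terms (u : nat -> R) : Un_cv u 0 -> exists M, forall n, Rabs (u n) <= M.
Proof.
  intros H. assert (H' : Un_cv (fun n => Rabs (u n)) 0).
  { intros eps He. destruct (H eps He) as [N HN]. exists N. intros n Hn.
    specialize (HN n Hn). unfold R_dist in *. rewrite Rminus_0_r in *.
    rewrite Rabs_Rabsolu; auto. }
  destruct (cauchy_maj _ (CV_Cauchy _ (exist _ 0 H'))) as [M HM]. exists M.
  intros n. apply HM. exists n; auto.
Qed.

Fixpoint decr (m : nat) (a : nat -> R) : nat -> R :=
  match m with O => a | S m' => PS_decr_1 (decr m' a) end.

Lemma decr_val m a k : decr m a k = a (m + k)%nat.
Proof.
  revert k; induction m; intros k; simpl; auto.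
  unfold PS_decr_1. rewrite IHm. f_equal; lia.
Qed.

Lemma CV_decr m a : CV_radius (decr m a) = CV_radius a.
Proof. induction m; simpl; auto. rewrite CV_radius_decr_1; auto. Qed.

Lemma PSeries_decr m a x : (forall k, (k < m)%nat -> a k = 0) ->
  PSeries a x = x ^ m * PSeries (decr m a) x.
Proof.
  induction m; intros Hz. simpl; ring.
  rewrite IHm by (intros; apply Hz; lia). simpl.
  rewrite (PSeries_decr_1_aux (decr m a) x). ring.
  rewrite decr_val. rewrite Nat.add_0_r. apply Hz; lia.
Qed.

Lemma phi_setup phi n : standing_phi phi n -> (n <= 3)%nat ->
  exists (m : nat) (b : nat -> R) (r1 : R), (m <= 3)%nat /\ 0 < r1 /\
    Rbar_lt r1 (CV_radius b) /\ 0 < b O /\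
    forall x, 0 <= x <= r1 -> phi x = x ^ m * PSeries b x.
Proof.
  intros [Hpos [Hneg [Han [_ Hn]]]] Hn3.
  destruct (Han 0) as [a [r [Hr Ha]]]; [lra|].
  set (x1 := Rmin r 1 / 2).
  assert (Hx1 : 0 < x1 /\ x1 <= 1 /\ x1 < r).
  { unfold x1. pose proof (Rmin_l r 1). pose proof (Rmin_r r 1).
    assert (0 < Rmin r 1) by (apply Rmin_pos; lra). lra. }
  assert (Hrad : Rbar_le x1 (CV_radius a)).
  { destruct (CV_radius_bounded a) as [Hub _]. apply Hub.
    apply bounded_terms.
    assert (Hs := Ha x1 ltac:(lra) ltac:(rewrite Rminus_0_r, Rabs_right; lra)).
    apply is_lim_seq_Reals. apply ex_series_lim_0. exists (phi x1). apply is_series_Reals.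
    intros eps He. destruct (Hs eps He) as [N HN]. exists N. intros n0 Hn0.
    specialize (HN n0 Hn0). unfold R_dist in *.
    replace (sum_f_R0 (fun k => a k * x1 ^ k) n0) with (sum_f_R0 (fun k => a k * (x1 - 0) ^ k) n0); auto.
    apply sum_eq; intros; rewrite Rminus_0_r; auto. }
  set (r1 := x1 / 2).
  assert (Hr1 : Rbar_lt r1 (CV_radius a)).
  { eapply Rbar_lt_le_trans; [|exact Hrad]. simpl. unfold r1; lra. }
  assert (Hphi : forall x, 0 <= x <= r1 -> phi x = PSeries a x).
  { intros x Hx. symmetry. unfold PSeries. apply is_series_unique.
    apply is_series_Reals.
    assert (Hs := Ha x ltac:(unfold r1 in *; lra) ltac:(rewrite Rminus_0_r, Rabs_right; unfold r1 in *; lra)).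
    intros eps He. destruct (Hs eps He) as [N HN]. exists N. intros n0 Hn0.
    specialize (HN n0 Hn0).
    replace (sum_f_R0 (fun k => a k * x ^ k) n0) with (sum_f_R0 (fun k => a k * (x - 0) ^ k) n0); auto.
    apply sum_eq; intros; rewrite Rminus_0_r; auto. }
  assert (Han0 : a n <> 0).
  { rewrite (RDerivn_ps phi a r1 Hr1 ltac:(intros; apply Hphi; lra) n 0) in Hn by (unfold r1; lra).
    rewrite PSeries_0 in Hn. intros Hz.
    assert (n = 0 \/ n = 1 \/ n = 2 \/ n = 3)%nat as [-> | [-> | [-> | ->]]] by lia;
      simpl in Hn; unfold PS_derive in Hn; simpl in Hn; rewrite Hz in Hn; lra. }
  assert (Hm : exists m, (m <= 3)%nat /\ a m <> 0 /\ forall k, (k < m)%nat -> a k = 0).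
  { destruct (Req_dec (a 0%nat) 0) as [H0|H0]; [|exists 0%nat; split; [lia|split; auto; intros; lia]].
    destruct (Req_dec (a 1%nat) 0) as [H1|H1]; [|exists 1%nat; split; [lia|split; auto; intros k Hk; assert (k = 0)%nat by lia; subst; auto]].
    destruct (Req_dec (a 2%nat) 0) as [H2|H2]; [|exists 2%nat; split; [lia|split; auto; intros k Hk; assert (k = 0 \/ k = 1)%nat as [|] by lia; subst; auto]].
    exists 3%nat; split; [lia|split].
    - intros H3. assert (n = 0 \/ n = 1 \/ n = 2 \/ n = 3)%nat as [-> | [-> | [-> | ->]]] by lia; auto.
    - intros k Hk; assert (k = 0 \/ k = 1 \/ k = 2)%nat as [|[|]] by lia; subst; auto. }
  destruct Hm as [m [Hm3 [Ham Hz]]].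
  exists m, (decr m a), r1. split; auto. split; [unfold r1; lra|].
  rewrite CV_decr. split; auto.
  assert (Heq : forall x, 0 <= x <= r1 -> phi x = x ^ m * PSeries (decr m a) x).
  { intros. rewrite Hphi by auto. apply PSeries_decr; auto. }
  split; auto.
  rewrite decr_val, Nat.add_0_r.
  destruct (Rtotal_order (a m) 0) as [Hlt|[Heq0|Hgt]]; auto; [|contradiction].
  exfalso.
  assert (Hc : continuity_pt (PSeries (decr m a)) 0).
  { apply PSeries_continuity. rewrite CV_decr. eapply Rbar_le_lt_trans; [|exact Hr1].
    simpl. rewrite Rabs_R0. unfold r1; lra. }
  destruct (Hc (- a m) ltac:(lra)) as [del [Hdel Hd]].
  set (y := Rmin del r1 / 2).
  assert (Hy : 0 < y /\ y < del /\ y <= r1).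
  { unfold y. pose proof (Rmin_l del r1). pose proof (Rmin_r del r1).
    assert (0 < Rmin del r1) by (apply Rmin_pos; unfold r1; lra). lra. }
  specialize (Hd y). simpl in Hd. unfold R_dist in Hd. rewrite PSeries_0, decr_val, Nat.add_0_r in Hd.
  assert (Hy2 : Rabs (PSeries (decr m a) y - a m) < - a m).
  { apply Hd. split. unfold D_x, no_cond; split; auto; lra. rewrite Rminus_0_r, Rabs_right; lra. }
  apply Rabs_def2 in Hy2.
  assert (0 <= phi y) by (apply Hpos; unfold r1 in *; lra).
  rewrite Heq in H by lra.
  assert (0 < y ^ m) by (apply pow_lt; lra).
  nra.
Qed.

Definition hr (E0 : R) (m : nat) (b : nat -> R) (s y : R) : R :=
  4 * PI * ((1 - y) / E0) ^ m * sqrt y * Fps b 0 (s * ((1 - y) / E0))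
  * Frp E0 1 0 (s * (y - 1)) * Frp E0 1 0 (s * (y - 1))
  * Frp (2 * E0) (/ 2) 0 (s * (y - 2)) * Frp E0 (-4) 0 (s * (-1)).

Definition hp (E0 : R) (m : nat) (b : nat -> R) (s y : R) : R :=
  4 * PI / 3 * ((1 - y) / E0) ^ m * y * sqrt y * Fps b 0 (s * ((1 - y) / E0))
  * Frp (2 * E0) (/ 2) 0 (s * (y - 2)) * Frp (2 * E0) (/ 2) 0 (s * (y - 2))
  * Frp (2 * E0) (/ 2) 0 (s * (y - 2)) * Frp E0 (-4) 0 (s * (-1)).

Lemma prod_bound s c d K : 0 < d -> 0 < K -> -d < s < d -> -K < c < K -> -(d*K) < s * c < d*K.
Proof. intros. split; nra. Qed.

Lemma bnd_gen s t d K H (c : R -> R) : 0 < d -> 0 < K -> -d < s < d ->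
  (-1/2 < t < 3/2 -> -K < c t < K) -> d * K <= H -> -1/2 < t < 3/2 -> -H < s * c t < H.
Proof. intros Hd HK Hs Hc HH Ht. pose proof (prod_bound s (c t) d K Hd HK Hs (Hc Ht)). lra. Qed.

Section S.
Variables (E0 : R) (m : nat) (b : nat -> R) (r1 : R).
Hypothesis HE0 : 0 < E0.
Hypothesis Hr1 : 0 < r1.
Hypothesis Hcv : Rbar_lt r1 (CV_radius b).

Definition dd := Rmin (E0 / 4) (r1 * E0 / 2).

Lemma dd_pos : 0 < dd.
Proof. unfold dd. apply Rmin_pos; try lra. apply Rmult_lt_0_compat; [apply Rmult_lt_0_compat|]; lra. Qed.
Lemma dd_le1 : dd <= E0 / 4. Proof. apply Rmin_l. Qed.
Lemma dd_le2 : dd <= r1 * E0 / 2. Proof. apply Rmin_r. Qed.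

Let Hfps : Fam (Fps b) (-r1) r1.
Proof. apply Fam_ps. apply Rbar_lt_le. auto. Qed.

Lemma Sm_psi k : Sm k dd (fun s y => Fps b 0 (s * ((1 - y) / E0))).
Proof.
  pose proof dd_pos. pose proof dd_le2.
  apply (Sm_comp k dd (Fps b) (fun y => (1 - y) / E0) (-r1) r1); auto.
  - intros; reg. 
  - intros s t Hs Ht. apply (bnd_gen s t dd (3/2/E0) r1 (fun y => (1-y)/E0)); auto.
    + apply Rdiv_lt_0_compat; lra.
    + intros. split.
      * apply Rmult_lt_reg_r with E0; auto. unfold Rdiv. field_simplify; lra.
      * apply Rmult_lt_reg_r with E0; auto. unfold Rdiv. field_simplify; lra.
    + apply Rle_trans with (r1 * E0 / 2 * (3/2/E0)).
      apply Rmult_le_compat_r; auto. left; apply Rdiv_lt_0_compat; lra.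
      replace (r1 * E0 / 2 * (3/2/E0)) with (3/4*r1) by (field; lra). lra.
Qed.

Lemma Sm_rp k B q (c : R -> R) K : 0 < B -> 0 < K -> dd * K <= B ->
  (forall t, -1/2 < t < 3/2 -> -K < c t < K) ->
  (forall t, continuity_pt c t) ->
  Sm k dd (fun s y => Frp B q 0 (s * c y)).
Proof.
  intros HB HK HdK Hc Hcc. pose proof dd_pos.
  apply (Sm_comp k dd (Frp B q) c (-B) B); auto.
  apply Fam_rp; auto.
  intros s t Hs Ht. apply (bnd_gen s t dd K B c); auto.
Qed.

Lemma Sm_F1 k : Sm k dd (fun s y => Frp E0 1 0 (s * (y - 1))).
Proof.
  pose proof dd_le1. pose proof dd_pos.
  apply (Sm_rp k E0 1 (fun y => y - 1) (3/2)); auto; try lra.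
  intros; lra. intros; reg.
Qed.

Lemma Sm_F2 k : Sm k dd (fun s y => Frp (2 * E0) (/ 2) 0 (s * (y - 2))).
Proof.
  pose proof dd_le1. pose proof dd_pos.
  apply (Sm_rp k (2*E0) (/2) (fun y => y - 2) (5/2)); auto; try lra.
  intros; lra. intros; reg.
Qed.

Lemma Sm_F3 k : Sm k dd (fun s y => Frp E0 (-4) 0 (s * (-1))).
Proof.
  pose proof dd_le1. pose proof dd_pos.
  apply (Sm_rp k E0 (-4) (fun y => -1) 2); auto; try lra.
  intros; lra. intros; reg.
Qed.

Ltac smt := first [apply Sm_psi | apply Sm_F1 | apply Sm_F2 | apply Sm_F3 |
    (apply Sm_const; intros; first [apply continuity_pt_sqrt; lra | reg; lra | reg]) |
    (apply Sm_mult; smt)].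

Lemma Sm_hr k : Sm k dd (hr E0 m b).
Proof. unfold hr. smt. Qed.

Lemma Sm_hp k : Sm k dd (hp E0 m b).
Proof. unfold hp. smt. Qed.
End S.

Ltac toR := match goal with |- ?a = ?b => change (@eq R a b) end.

Lemma scalR (a b : R) : scal a b = a * b. Proof. reflexivity. Qed.
Lemma scalR2 (a b : R) : @scal R_Ring R_ModuleSpace a b = a * b. Proof. reflexivity. Qed.
Lemma scalR3 (a b : R) : @scal R_AbsRing R_NormedModule a b = a * b. Proof. reflexivity. Qed.

Lemma DefsRInt_eq f a b : ex_RInt f a b -> Defs.RInt f a b = RInt f a b.
Proof.
  intros H. pose proof (ex_RInt_Reals_0 _ _ _ H) as pr.
  unfold Defs.RInt.
  assert (Hex : exists l, exists pr : Riemann_integrable f a b, RiemannInt pr = l)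
    by (exists (RiemannInt pr); exists pr; auto).
  destruct (epsilon_spec (inhabits 0) _ Hex) as [pr' Hpr']. rewrite <- Hpr'.
  symmetry. apply RInt_Reals.
Qed.

Lemma cov (F H : R -> R) (c s V : R) : 0 < s -> c <> 0 -> ex_RInt H 0 1 ->
  (forall y, 0 < y < 1 -> c * (s * F (s * y + V)) = H y) ->
  c * Defs.RInt F V (s + V) = RInt H 0 1.
Proof.
  intros Hs Hc HH Hpt.
  set (G := fun y => s * F (s * y + V)).
  assert (HG : ex_RInt G 0 1).
  { apply (ex_RInt_ext (fun y => /c * H y)).
    - rewrite Rmin_left, Rmax_right by lra. intros y Hy. unfold G.
      rewrite <- Hpt by auto. toR. field; auto.
    - apply (ex_RInt_scal (V := R_NormedModule) H 0 1 (/c)); auto. }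
  assert (HF : ex_RInt F V (s + V)).
  { assert (H1 := ex_RInt_comp_lin G (/s) (- V / s) V (s + V)).
    replace (/ s * V + - V / s) with 0 in H1 by (field; lra).
    replace (/ s * (s + V) + - V / s) with 1 in H1 by (field; lra).
    specialize (H1 HG).
    revert H1. apply ex_RInt_ext.
    intros x _. unfold G. 
    transitivity (/ s * (s * F (s * (/ s * x + - V / s) + V))). reflexivity.
    replace (s * (/ s * x + - V / s) + V) with x by (field; lra). toR. field; lra. }
  rewrite DefsRInt_eq by auto.
  assert (H2 := RInt_comp_lin F s V 0 1).
  replace (s * 0 + V) with V in H2 by ring. replace (s * 1 + V) with (s + V) in H2 by ring.
  rewrite <- (H2 HF).
  transitivity (c * RInt G 0 1). { f_equal; try (apply RInt_ext; intros; reflexivity). }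
  transitivity (RInt (fun y => c * G y) 0 1).
  { symmetry. apply (RInt_scal (V := R_CompleteNormedModule) G 0 1 c HG). }
  apply RInt_ext. rewrite Rmin_left, Rmax_right by lra. intros y Hy.
  unfold G. apply Hpt; auto.
Qed.

Lemma Rpower_m4 x : 0 < x -> Rpower x (-4) = / x ^ 4.
Proof.
  intros Hx. replace (-4) with (- INR 4) by (simpl; lra).
  rewrite Rpower_Ropp, Rpower_pow; auto.
Qed.

Section S.
Variables (E0 : R) (m : nat) (b : nat -> R) (r1 : R) (phi : R -> R).
Hypothesis HE0 : 0 < E0.
Hypothesis Hr1 : 0 < r1.
Hypothesis Hcv : Rbar_lt r1 (CV_radius b).
Hypothesis Hphi : forall x, 0 <= x <= r1 -> phi x = x ^ m * PSeries b x.

Let dd := dd E0 r1.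
Lemma dd_prop : 0 < dd /\ dd <= E0 / 4 /\ dd <= r1 * E0 / 2.
Proof. split; [apply dd_pos; auto|split; [apply dd_le1|apply dd_le2]]. Qed.

Lemma sqrt_form s y : 0 < s < dd -> 0 < y < 1 ->
  sqrt (((s * y + (E0 - s)) / (E0 - s)) ^ 2 - 1) =
  sqrt s * sqrt y * sqrt (2 * E0 + s * (y - 2)) / (E0 - s).
Proof.
  intros Hs Hy. pose proof dd_prop as [_ [Hd1 _]].
  set (z := sqrt s * sqrt y * sqrt (2 * E0 + s * (y - 2)) / (E0 - s)).
  assert (Hz : 0 <= z).
  { unfold z. apply Rmult_le_pos. repeat apply Rmult_le_pos; apply sqrt_pos.
    left; apply Rinv_0_lt_compat; lra. }
  rewrite <- (sqrt_square z Hz). f_equal. unfold z.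
  replace (sqrt s * sqrt y * sqrt (2 * E0 + s * (y - 2)) / (E0 - s) *
    (sqrt s * sqrt y * sqrt (2 * E0 + s * (y - 2)) / (E0 - s))) with
    ((sqrt s * sqrt s) * (sqrt y * sqrt y) * (sqrt (2 * E0 + s * (y - 2)) * sqrt (2 * E0 + s * (y - 2))) / ((E0 - s) * (E0 - s))) by (field; lra).
  rewrite !sqrt_sqrt by nra. field. lra.
Qed.

Lemma arg_form s y : 0 < s < dd -> 0 < y < 1 ->
  1 - (s * y + (E0 - s)) / E0 = s * ((1 - y) / E0) /\ 0 <= s * ((1 - y) / E0) <= r1.
Proof.
  intros Hs Hy. pose proof dd_prop as [_ [Hd1 Hd2]]. split. field; lra.
  split. apply Rmult_le_pos. lra. apply Rmult_le_pos; [lra|left; apply Rinv_0_lt_compat; lra].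
  apply Rle_trans with (s * (1 / E0)). apply Rmult_le_compat_l. lra.
  unfold Rdiv; apply Rmult_le_compat_r. left; apply Rinv_0_lt_compat; lra. lra.
  apply Rle_trans with (dd * (1/E0)). apply Rmult_le_compat_r. left; apply Rdiv_lt_0_compat; lra. lra.
  apply Rle_trans with (r1 * E0 / 2 * (1 / E0)). apply Rmult_le_compat_r. left; apply Rdiv_lt_0_compat; lra. lra.
  replace (r1 * E0 / 2 * (1 / E0)) with (r1/2) by (field; lra). lra.
Qed.

Lemma rho_eq s : 0 < s < dd ->
  rho phi E0 (E0 - s) = s ^ (S m) * sqrt s * RInt (hr E0 m b s) 0 1.
Proof.
  intros Hs. pose proof dd_prop as [Hd0 [Hd1 Hd2]]. unfold rho.
  assert (HV : 0 < E0 - s) by lra.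
  set (V := E0 - s) in *.
  set (F := fun E => phi (1 - E / E0) * E ^ 2 * sqrt ((E / V) ^ 2 - 1)).
  transitivity (4 * PI / V ^ 3 * Defs.RInt F V (s + V)).
  { f_equal. f_equal. unfold V; ring. }
  rewrite (cov F (fun y => s ^ (S m) * sqrt s * hr E0 m b s y)).
  - apply (RInt_scal (V := R_CompleteNormedModule) (hr E0 m b s) 0 1).
    eapply Sm_exRInt. apply (Sm_hr E0 m b r1 HE0 Hr1 Hcv 0). fold dd; lra.
  - lra.
  - assert (0 < PI) by apply PI_RGT_0. apply Rgt_not_eq. apply Rdiv_lt_0_compat. lra. apply pow_lt; lra.
  - apply (ex_RInt_scal (V := R_NormedModule)). eapply Sm_exRInt. apply (Sm_hr E0 m b r1 HE0 Hr1 Hcv 0). fold dd; lra.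
  - intros y Hy. unfold F, V. destruct (arg_form s y Hs Hy) as [Ha Hb].
    rewrite Ha, Hphi by auto. rewrite sqrt_form by auto.
    unfold hr, Fps. simpl PSd. rewrite !Frp0.
    assert (0 < E0 + s * (y - 1)) by nra. assert (0 < 2 * E0 + s * (y - 2)) by nra.
    rewrite (Rpower_1 (E0 + s * (y - 1))) by auto. rewrite Rpower_sqrt by auto. rewrite Rpower_m4 by lra.
    rewrite Rpow_mult_distr. simpl pow.
    replace (s * y + (E0 - s)) with (E0 + s * (y - 1)) by ring.
    replace (E0 + s * -1) with (E0 - s) by ring.
    field. lra.
Qed.

Lemma pr_eq s : 0 < s < dd ->
  pr phi E0 (E0 - s) = s ^ (S (S m)) * sqrt s * RInt (hp E0 m b s) 0 1.
Proof.
  intros Hs. pose proof dd_prop as [Hd0 [Hd1 Hd2]]. unfold pr.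
  assert (HV : 0 < E0 - s) by lra.
  set (V := E0 - s) in *.
  set (F := fun E => phi (1 - E / E0) * sqrt ((E / V) ^ 2 - 1) ^ 3).
  transitivity (4 * PI / (3 * V) * Defs.RInt F V (s + V)).
  { f_equal. f_equal. unfold V; ring. }
  rewrite (cov F (fun y => s ^ (S (S m)) * sqrt s * hp E0 m b s y)).
  - apply (RInt_scal (V := R_CompleteNormedModule) (hp E0 m b s) 0 1).
    eapply Sm_exRInt. apply (Sm_hp E0 m b r1 HE0 Hr1 Hcv 0). fold dd; lra.
  - lra.
  - assert (0 < PI) by apply PI_RGT_0. apply Rgt_not_eq. apply Rdiv_lt_0_compat; lra.
  - apply (ex_RInt_scal (V := R_NormedModule)). eapply Sm_exRInt. apply (Sm_hp E0 m b r1 HE0 Hr1 Hcv 0). fold dd; lra.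
  - intros y Hy. unfold F, V. destruct (arg_form s y Hs Hy) as [Ha Hb].
    rewrite Ha, Hphi by auto. rewrite sqrt_form by auto.
    unfold hp, Fps. simpl PSd. rewrite !Frp0.
    assert (0 < 2 * E0 + s * (y - 2)) by nra.
    rewrite Rpower_sqrt by auto. rewrite Rpower_m4 by lra.
    rewrite Rpow_mult_distr. simpl pow.
    replace (E0 + s * -1) with (E0 - s) by ring.
    set (q := sqrt (2 * E0 + s * (y - 2))).
    replace ((sqrt s * sqrt y * q / (E0 - s)) * ((sqrt s * sqrt y * q / (E0 - s)) *
       ((sqrt s * sqrt y * q / (E0 - s)) * 1))) with
      ((sqrt s * sqrt s) * sqrt s * ((sqrt y * sqrt y) * sqrt y) * (q * q * q) / ((E0 - s) * (E0 - s) * (E0 - s))) by (field; lra).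
    rewrite !sqrt_sqrt by lra.
    field. lra.
Qed.
End S.

Lemma dmult (f g : R -> R) (x a b : R) : is_derive f x a -> is_derive g x b ->
  is_derive (fun y => f y * g y) x (a * g x + f x * b).
Proof. intros H H0. eapply is_derive_eq. apply (is_derive_mult f g x a b H H0). intros; apply Rmult_comm. reflexivity. Qed.
Lemma dplus (f g : R -> R) (x a b : R) : is_derive f x a -> is_derive g x b ->
  is_derive (fun y => f y + g y) x (a + b).
Proof. intros H H0. eapply is_derive_eq. apply (is_derive_plus f g x a b H H0). reflexivity. Qed.
Lemma ddiv (f g : R -> R) (x a b : R) : is_derive f x a -> is_derive g x b -> g x <> 0 ->
  is_derive (fun y => f y / g y) x ((a * g x - f x * b) / g x ^ 2).
Proof. intros. apply is_derive_div; auto. Qed.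

Lemma Deriv_eq (f : R -> R) (x l : R) : derivable_pt_lim f x l -> Deriv f x = l.
Proof.
  intros H. unfold Deriv.
  assert (Hex : exists l, derivable_pt_lim f x l) by (exists l; auto).
  pose proof (epsilon_spec (inhabits 0) _ Hex) as Hs.
  eapply uniqueness_limite; eauto.
Qed.

Lemma dlin (E0 x : R) : is_derive (fun y => E0 - y) x (-1).
Proof. auto_derive; auto; ring. Qed.

Lemma Deriv_refl (u f : R -> R) (E0 d V l : R) : 0 < d -> E0 - d < V < E0 ->
  (forall V', E0 - d < V' < E0 -> u V' = f (E0 - V')) ->
  is_derive f (E0 - V) l -> Deriv u V = - l.
Proof.
  intros Hd HV Hu Hf. apply Deriv_eq. apply is_derive_Reals.
  apply (is_derive_ext_loc (fun V' => f (E0 - V'))).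
  - apply (locally_interval _ V (E0 - d) E0); simpl; try lra.
    intros y H1 H2. symmetry. apply Hu. simpl in *; lra.
  - eapply is_derive_eq. apply (is_derive_comp f (fun V' => E0 - V') V l (-1) Hf (dlin E0 V)).
    change (-1 * l = - l). ring.
Qed.

Lemma divopp a b : - a / - b = a / b.
Proof. unfold Rdiv. rewrite Rinv_opp. ring. Qed.

Definition alpha (m : nat) := INR m + 3 / 2.
Definition Pf (m : nat) (s : R) := s ^ (S m) * sqrt s.

Lemma dP m s : 0 < s -> is_derive (Pf m) s (alpha m * Pf m s / s).
Proof.
  intros Hs. unfold Pf, alpha.
  assert (Hq : 0 < sqrt s) by (apply sqrt_lt_R0; auto).
  assert (Hq2 : sqrt s * sqrt s = s) by (apply sqrt_sqrt; lra).
  eapply is_derive_eq. apply dmult.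
  - apply is_derive_Reals. apply derivable_pt_lim_pow.
  - apply is_derive_Reals. apply derivable_pt_lim_sqrt. auto.
  - match goal with |- ?a = ?b => change (@eq R a b) end. rewrite S_INR. simpl pow. simpl Nat.pred.
    replace (s * s ^ m * / (2 * sqrt s)) with (s ^ m * sqrt s / 2).
    + field. lra.
    + transitivity ((sqrt s * sqrt s) * s ^ m * / (2 * sqrt s)). field. lra. rewrite Hq2. reflexivity.
Qed.

Section Alg.
Variables (m : nat) (d : R) (Rr Rr1 Rr2 Qq Qq1 Qq2 : R -> R).
Hypothesis HR1 : forall s, -d < s < d -> is_derive Rr s (Rr1 s).
Hypothesis HR2 : forall s, -d < s < d -> is_derive Rr1 s (Rr2 s).
Hypothesis HQ1 : forall s, -d < s < d -> is_derive Qq s (Qq1 s).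
Hypothesis HQ2 : forall s, -d < s < d -> is_derive Qq1 s (Qq2 s).

Let a := alpha m.
Definition ff s := Pf m s * Rr s.
Definition gg s := Pf m s * s * Qq s.
Definition ff1 s := Pf m s / s * (a * Rr s + s * Rr1 s).
Definition ff2 s := Pf m s / s ^ 2 * (a * (a - 1) * Rr s + 2 * a * s * Rr1 s + s ^ 2 * Rr2 s).
Definition gg1 s := Pf m s * ((a + 1) * Qq s + s * Qq1 s).
Definition gg2 s := Pf m s / s * ((a + 1) * a * Qq s + 2 * (a + 1) * s * Qq1 s + s ^ 2 * Qq2 s).

Ltac toR2 := match goal with |- ?a = ?b => change (@eq R a b) end.

Lemma d_ff s : 0 < s < d -> is_derive ff s (ff1 s).
Proof.
  intros Hs. eapply is_derive_eq. apply dmult. apply dP; lra. apply HR1; lra.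
  unfold ff1. fold a. toR2. field. lra.
Qed.

Lemma d_id s : is_derive (fun x => x) s 1.
Proof. apply isd_id. Qed.

Lemma d_ff1 s : 0 < s < d -> is_derive ff1 s (ff2 s).
Proof.
  intros Hs. unfold ff1. eapply is_derive_eq.
  apply (dmult (fun s => Pf m s / s) (fun s => a * Rr s + s * Rr1 s)).
  apply ddiv. apply dP; lra. apply d_id. lra.
  apply dplus. apply (is_derive_scal Rr). apply HR1; lra.
  apply dmult. apply d_id. apply HR2; lra.
  unfold ff2. fold a. toR2. field. lra.
Qed.

Lemma d_gg s : 0 < s < d -> is_derive gg s (gg1 s).
Proof.
  intros Hs. unfold gg. eapply is_derive_eq.
  apply (dmult (fun s => Pf m s * s) Qq). apply dmult. apply dP; lra. apply d_id. apply HQ1; lra.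
  unfold gg1. fold a. toR2. field. lra.
Qed.

Lemma d_gg1 s : 0 < s < d -> is_derive gg1 s (gg2 s).
Proof.
  intros Hs. unfold gg1. eapply is_derive_eq.
  apply (dmult (Pf m) (fun s => (a + 1) * Qq s + s * Qq1 s)).
  apply dP; lra.
  apply dplus. apply (is_derive_scal Qq). apply HQ1; lra.
  apply dmult. apply d_id. apply HQ2; lra.
  unfold gg2. fold a. toR2. field. lra.
Qed.

Definition KK s := (ff s + gg s) / (ff s + 3 * gg s) * (ff1 s / gg1 s).
Definition KK1 s :=
  ((ff1 s + gg1 s) * (ff s + 3 * gg s) - (ff s + gg s) * (ff1 s + 3 * gg1 s)) / (ff s + 3 * gg s) ^ 2 * (ff1 s / gg1 s)
  + (ff s + gg s) / (ff s + 3 * gg s) * ((ff2 s * gg1 s - ff1 s * gg2 s) / gg1 s ^ 2).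

Lemma d_KK s : 0 < s < d -> ff s + 3 * gg s <> 0 -> gg1 s <> 0 -> is_derive KK s (KK1 s).
Proof.
  intros Hs H1 H2. unfold KK. eapply is_derive_eq.
  apply (dmult (fun s => (ff s + gg s) / (ff s + 3 * gg s)) (fun s => ff1 s / gg1 s)).
  apply ddiv; auto. apply dplus. apply d_ff; auto. apply d_gg; auto.
  apply dplus. apply d_ff; auto. apply (is_derive_scal gg). apply d_gg; auto.
  apply ddiv; auto. apply d_ff1; auto. apply d_gg1; auto.
  unfold KK1. toR2. field. auto.
Qed.

Definition Hexpr (s r0 r1 r2 q0 q1 q2 : R) :=
  (((r0 + s * q0) * (a * r0 + s * r1)) / ((r0 + 3 * s * q0) * ((a + 1) * q0 + s * q1))) ^ 2 / 5
  + 2 * s * (((r0 + s * q0) * (a * r0 + s * r1)) / ((r0 + 3 * s * q0) * ((a + 1) * q0 + s * q1)))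
  + (r0 + s * q0) / ((a + 1) * q0 + s * q1) *
    ((((a * r0 + s * r1) + s * ((a + 1) * q0 + s * q1)) * (r0 + 3 * s * q0)
       - (r0 + s * q0) * ((a * r0 + s * r1) + 3 * s * ((a + 1) * q0 + s * q1))) / (r0 + 3 * s * q0) ^ 2
       * ((a * r0 + s * r1) / ((a + 1) * q0 + s * q1))
     + (r0 + s * q0) / (r0 + 3 * s * q0) *
       (((a * (a - 1) * r0 + 2 * a * s * r1 + s ^ 2 * r2) * ((a + 1) * q0 + s * q1)
         - (a * r0 + s * r1) * ((a + 1) * a * q0 + 2 * (a + 1) * s * q1 + s ^ 2 * q2))
        / ((a + 1) * q0 + s * q1) ^ 2)).

Definition Hf s := Hexpr s (Rr s) (Rr1 s) (Rr2 s) (Qq s) (Qq1 s) (Qq2 s).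

Lemma Ifun_alg s : 0 < s -> Rr s + 3 * s * Qq s <> 0 -> (a + 1) * Qq s + s * Qq1 s <> 0 ->
  s ^ 2 * (/ 5 * KK s ^ 2 + 2 * KK s + (ff s + gg s) * (- KK1 s / - gg1 s)) = Hf s.
Proof.
  intros Hs HD HG. assert (HP : Pf m s <> 0).
  { unfold Pf. apply Rmult_integral_contrapositive. split. apply pow_nonzero; lra.
    apply Rgt_not_eq. apply sqrt_lt_R0; auto. }
  rewrite divopp. unfold Hf, Hexpr, KK, KK1, ff, gg, ff1, gg1, ff2, gg2. fold a.
  field. repeat split; try assumption; try lra.
  replace (Pf m s * Rr s + 3 * (Pf m s * s * Qq s)) with (Pf m s * (Rr s + 3 * s * Qq s)) by ring.
  apply Rmult_integral_contrapositive; split; auto.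
Qed.

Lemma Hf0 : Rr 0 > 0 -> Qq 0 > 0 ->
  Hf 0 = a * (Rr 0) ^ 2 / ((a + 1) ^ 2 * (Qq 0) ^ 2) * (a / 5 - 1).
Proof.
  intros H1 H2. unfold Hf, Hexpr. assert (Ha : 0 < a) by (unfold a, alpha; pose proof (pos_INR m); lra). clearbody a. field.
  repeat split; nra.
Qed.
End Alg.

Lemma Sm_chain (d : R) (h : R -> R -> R) : Sm 3 d h ->
  exists R1 R2 R3 : R -> R, forall s, -d < s < d ->
    is_derive (fun z => RInt (h z) 0 1) s (R1 s) /\ is_derive R1 s (R2 s) /\ is_derive R2 s (R3 s).
Proof.
  intros H3. destruct (Sm_int _ _ _ H3) as [h1 [S1 D1]].
  destruct (Sm_int _ _ _ S1) as [h2 [S2 D2]].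
  destruct (Sm_int _ _ _ S2) as [h3 [S3 D3]].
  exists (fun s => RInt (h1 s) 0 1), (fun s => RInt (h2 s) 0 1), (fun s => RInt (h3 s) 0 1).
  intros s Hs. split; [|split]; auto.
Qed.

Lemma Rpower_pos x q : 0 < Rpower x q.
Proof. unfold Rpower. apply exp_pos. Qed.

Lemma cont_at (f : R -> R) x l : is_derive f x l -> continuity_pt f x.
Proof.
  intros H. apply continuity_pt_filterlim.
  apply (ex_derive_continuous (K:=R_AbsRing) (V:=R_NormedModule) f). exists l; auto.
Qed.

Lemma cont_ex (f : R -> R) x : ex_derive f x -> continuity_pt f x.
Proof. intros [l H]. eapply cont_at; eauto. Qed.

Lemma cont_near (f : R -> R) c : continuity_pt f 0 -> c < f 0 ->
  exists del, 0 < del /\ forall s, -del < s < del -> c < f s.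
Proof.
  intros Hc Hf. destruct (Hc (f 0 - c)) as [del [Hdel Hd]]; [lra|].
  exists del. split; auto. intros s Hs.
  destruct (Req_dec s 0) as [->|Hne]; auto.
  assert (Hx : Rabs (f s - f 0) < f 0 - c).
  { apply Hd. split. split; [exact I| auto]. simpl. unfold R_dist. rewrite Rminus_0_r. apply Rabs_def1; lra. }
  apply Rabs_def2 in Hx. lra.
Qed.

Theorem main_core (E0 : R) (phi : R -> R) (n : nat) :
  0 < E0 -> standing_phi phi n -> (n <= 3)%nat ->
  exists del H0, 0 < del /\ del < E0 /\ H0 < 0 /\
    forall s, 0 < s < del -> Ifun phi E0 (E0 - s) < H0 / 2 / s ^ 2.
Proof.
  intros HE0 Hst Hn3.
  destruct (phi_setup phi n Hst Hn3) as [m [b [r1 [Hm3 [Hr1 [Hcv [Hb0 Hphi]]]]]]].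
  set (d := dd E0 r1).
  assert (Hd : 0 < d /\ d <= E0 / 4 /\ d <= r1 * E0 / 2) by (apply dd_prop; auto).
  destruct (Sm_chain _ _ (Sm_hr E0 m b r1 HE0 Hr1 Hcv 3)) as [Rr1 [Rr2 [Rr3 HR]]].
  destruct (Sm_chain _ _ (Sm_hp E0 m b r1 HE0 Hr1 Hcv 3)) as [Qq1 [Qq2 [Qq3 HQ]]].
  set (Rr := (fun z => RInt (hr E0 m b z) 0 1) : R -> R).
  set (Qq := (fun z => RInt (hp E0 m b z) 0 1) : R -> R).
  fold d in HR, HQ.
  assert (HR1 : forall s, -d < s < d -> is_derive Rr s (Rr1 s)) by (intros; apply HR; auto).
  assert (HR2 : forall s, -d < s < d -> is_derive Rr1 s (Rr2 s)) by (intros; apply HR; auto).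
  assert (HR3 : forall s, -d < s < d -> is_derive Rr2 s (Rr3 s)) by (intros; apply HR; auto).
  assert (HQ1 : forall s, -d < s < d -> is_derive Qq s (Qq1 s)) by (intros; apply HQ; auto).
  assert (HQ2 : forall s, -d < s < d -> is_derive Qq1 s (Qq2 s)) by (intros; apply HQ; auto).
  assert (HQ3 : forall s, -d < s < d -> is_derive Qq2 s (Qq3 s)) by (intros; apply HQ; auto).
  clear HR HQ.
  assert (Hd0 : -d < 0 < d) by lra.
  assert (HPI : 0 < PI) by apply PI_RGT_0.
  assert (Rpos : Rr 0 > 0).
  { unfold Rr. apply RInt_gt_0. lra.
    - intros y Hy. unfold hr, Fps. simpl PSd. rewrite !Rmult_0_l, PSeries_0.
      unfold Frp. simpl cf. set (pp := PI) in *. clearbody pp.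
      repeat apply Rmult_lt_0_compat; first [apply Rpower_pos | lra |
        (apply pow_lt; apply Rdiv_lt_0_compat; lra) | (apply sqrt_lt_R0; lra)].
    - intros y Hy. apply cont2_cont2. apply (Sm_cont _ _ _ (Sm_hr E0 m b r1 HE0 Hr1 Hcv 0)); auto. }
  assert (Qpos : Qq 0 > 0).
  { unfold Qq. apply RInt_gt_0. lra.
    - intros y Hy. unfold hp, Fps. simpl PSd. rewrite !Rmult_0_l, PSeries_0.
      unfold Frp. simpl cf. set (pp := PI) in *. clearbody pp.
      repeat apply Rmult_lt_0_compat; first [apply Rpower_pos | lra |
        (apply pow_lt; apply Rdiv_lt_0_compat; lra) | (apply sqrt_lt_R0; lra)].
    - intros y Hy. apply cont2_cont2. apply (Sm_cont _ _ _ (Sm_hp E0 m b r1 HE0 Hr1 Hcv 0)); auto. }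
  assert (Ha : 0 < alpha m) by (unfold alpha; pose proof (pos_INR m); lra).
  assert (Ha5 : alpha m < 5).
  { unfold alpha. assert (INR m <= 3). { replace 3 with (INR 3) by (simpl; lra). apply le_INR; auto. } lra. }
  set (H0 := Hf m Rr Rr1 Rr2 Qq Qq1 Qq2 0).
  assert (HH0 : H0 < 0).
  { unfold H0. rewrite Hf0 by auto.
    assert (0 < alpha m * Rr 0 ^ 2 / ((alpha m + 1) ^ 2 * Qq 0 ^ 2)).
    { apply Rdiv_lt_0_compat. apply Rmult_lt_0_compat; auto. apply pow_lt; lra.
      apply Rmult_lt_0_compat; apply pow_lt; lra. }
    assert (alpha m / 5 - 1 < 0) by lra. nra. }
  assert (Hex : forall f f' : R -> R, (forall s, -d < s < d -> is_derive f s (f' s)) -> ex_derive f 0).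
  { intros f f' Hf'. exists (f' 0). apply Hf'; auto. }
  assert (CD : continuity_pt (fun s => Rr s + 3 * s * Qq s) 0).
  { apply cont_ex.
    auto_derive. repeat split; try (eapply Hex; eauto; fail). }
  assert (CG : continuity_pt (fun s => (alpha m + 1) * Qq s + s * Qq1 s) 0).
  { apply cont_ex.
    auto_derive. repeat split; try (eapply Hex; eauto; fail). }
  assert (CH : continuity_pt (fun s => - Hf m Rr Rr1 Rr2 Qq Qq1 Qq2 s) 0).
  { apply cont_ex.
    unfold Hf, Hexpr. auto_derive.
    repeat split; try (eapply Hex; eauto; fail). all: try (intro Hc; nra). all: apply Rmult_integral_contrapositive; split; apply Rgt_not_eq; nra. }
  destruct (cont_near _ 0 CD) as [e1 [He1 P1]]. { simpl. lra. }
  destruct (cont_near _ 0 CG) as [e2 [He2 P2]]. { simpl. nra. }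
  destruct (cont_near _ (- H0 / 2) CH) as [e3 [He3 P3]]. { fold H0. lra. }
  set (del := Rmin d (Rmin e1 (Rmin e2 e3))).
  assert (Hdel : 0 < del /\ del <= d /\ del <= e1 /\ del <= e2 /\ del <= e3).
  { unfold del. repeat split.
    - repeat apply Rmin_pos; lra.
    - apply Rmin_l.
    - eapply Rle_trans; [apply Rmin_r|apply Rmin_l].
    - eapply Rle_trans; [apply Rmin_r|]. eapply Rle_trans; [apply Rmin_r|apply Rmin_l].
    - eapply Rle_trans; [apply Rmin_r|]. eapply Rle_trans; [apply Rmin_r|apply Rmin_r]. }
  exists del, H0. split; [lra|]. split; [lra|]. split; auto.
  intros s Hs.
  assert (Hrho : forall V', E0 - d < V' < E0 -> rho phi E0 V' = ff m Rr (E0 - V')).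
  { intros V' HV'. replace V' with (E0 - (E0 - V')) at 1 by ring.
    rewrite (rho_eq E0 m b r1 phi HE0 Hr1 Hcv Hphi) by (fold d; lra). reflexivity. }
  assert (Hpr : forall V', E0 - d < V' < E0 -> pr phi E0 V' = gg m Qq (E0 - V')).
  { intros V' HV'. replace V' with (E0 - (E0 - V')) at 1 by ring.
    rewrite (pr_eq E0 m b r1 phi HE0 Hr1 Hcv Hphi) by (fold d; lra).
    unfold gg, Pf, Qq. simpl. ring. }
  assert (HDr : forall V', E0 - d < V' < E0 -> Deriv (rho phi E0) V' = - ff1 m Rr Rr1 (E0 - V')).
  { intros V' HV'. apply (Deriv_refl _ (ff m Rr) E0 d); try lra; auto.
    apply (d_ff m d Rr Rr1 HR1). lra. }
  assert (HDp : forall V', E0 - d < V' < E0 -> Deriv (pr phi E0) V' = - gg1 m Qq Qq1 (E0 - V')).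
  { intros V' HV'. apply (Deriv_refl _ (gg m Qq) E0 d); try lra; auto.
    apply (d_gg m d Qq Qq1 HQ1). lra. }
  assert (Hkap : forall V', E0 - d < V' < E0 -> kappa phi E0 V' = KK m Rr Rr1 Qq Qq1 (E0 - V')).
  { intros V' HV'. unfold kappa. rewrite Hrho, Hpr, HDr, HDp by auto. rewrite divopp. reflexivity. }
  assert (HP : 0 < Pf m s).
  { unfold Pf. apply Rmult_lt_0_compat. apply pow_lt; lra. apply sqrt_lt_R0; lra. }
  assert (HDs : 0 < Rr s + 3 * s * Qq s) by (apply P1; lra).
  assert (HGs : 0 < (alpha m + 1) * Qq s + s * Qq1 s) by (apply P2; lra).
  assert (HHs : Hf m Rr Rr1 Rr2 Qq Qq1 Qq2 s < H0 / 2).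
  { assert (- H0 / 2 < - Hf m Rr Rr1 Rr2 Qq Qq1 Qq2 s) by (apply P3; lra). lra. }
  assert (HDk : Deriv (kappa phi E0) (E0 - s) = - KK1 m Rr Rr1 Rr2 Qq Qq1 Qq2 s).
  { replace s with (E0 - (E0 - s)) at 2 by ring.
    apply (Deriv_refl _ (KK m Rr Rr1 Qq Qq1) E0 d); try lra; auto.
    replace (E0 - (E0 - s)) with s by ring.
    apply (d_KK m d Rr Rr1 Rr2 Qq Qq1 Qq2 HR1 HR2 HQ1 HQ2); try lra.
    - unfold ff, gg. replace (Pf m s * Rr s + 3 * (Pf m s * s * Qq s)) with (Pf m s * (Rr s + 3 * s * Qq s)) by ring.
      apply Rgt_not_eq. apply Rmult_lt_0_compat; auto.
    - unfold gg1. apply Rgt_not_eq. apply Rmult_lt_0_compat; auto. }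
  unfold Ifun. rewrite HDk. rewrite Hkap, Hrho, Hpr, HDp by lra.
  replace (E0 - (E0 - s)) with s by ring.
  assert (Halg := Ifun_alg m Rr Rr1 Rr2 Qq Qq1 Qq2 s ltac:(lra) ltac:(lra) ltac:(lra)).
  set (X := / 5 * KK m Rr Rr1 Qq Qq1 s ^ 2 + 2 * KK m Rr Rr1 Qq Qq1 s +
       (ff m Rr s + gg m Qq s) * (- KK1 m Rr Rr1 Rr2 Qq Qq1 Qq2 s / - gg1 m Qq Qq1 s)) in *.
  assert (Hs2 : 0 < s ^ 2) by (apply pow_lt; lra).
  replace X with (Hf m Rr Rr1 Rr2 Qq Qq1 Qq2 s / s ^ 2) by (rewrite <- Halg; field; lra).
  unfold Rdiv. apply Rmult_lt_compat_r. apply Rinv_0_lt_compat; auto. lra.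
Qed.

Theorem mainTheorem2 (E0 : R) (phi : R -> R) (n : nat) :
  0 < E0 ->
  standing_phi phi n ->
  (n <= 3)%nat ->
  (forall M : R, exists V0, 0 < V0 < E0 /\
     forall V, V0 <= V < E0 -> Ifun phi E0 V < M) /\
  (exists V0, 0 < V0 < E0 /\
     forall V, V0 <= V < E0 -> Ifun phi E0 V <= 0).
Proof.
  intros HE0 Hst Hn.
  destruct (main_core E0 phi n HE0 Hst Hn) as [del [H0 [Hdel [HdE [HH0 Hcore]]]]].
  assert (P1 : forall M : R, exists V0, 0 < V0 < E0 /\
     forall V, V0 <= V < E0 -> Ifun phi E0 V < M).
  { intros M.
    assert (Hgen : forall s0, 0 < s0 -> s0 < del ->
              (forall s, 0 < s <= s0 -> H0 / 2 / s ^ 2 < M) ->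
              exists V0, 0 < V0 < E0 /\ forall V, V0 <= V < E0 -> Ifun phi E0 V < M).
    { intros s0 Hs0 Hs0d Hb. exists (E0 - s0). split; [lra|].
      intros V HV. replace V with (E0 - (E0 - V)) by ring.
      eapply Rlt_trans. apply Hcore; lra. apply Hb; lra. }
    destruct (Rle_or_lt 0 M) as [HM|HM].
    - apply (Hgen (del / 2)); try lra. intros s Hs.
      assert (0 < s ^ 2) by (apply pow_lt; lra).
      assert (H0 / 2 / s ^ 2 < 0). { unfold Rdiv. apply Rmult_neg_pos. lra. apply Rinv_0_lt_compat; auto. }
      lra.
    - set (X := H0 / (2 * M)).
      assert (HX : 0 < X). { unfold X. unfold Rdiv. apply Rmult_neg_neg. lra. apply Rinv_lt_0_compat. lra. }
      set (c := Rmin 1 (X / 2)).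
      assert (Hc : 0 < c /\ c <= 1 /\ c <= X / 2).
      { unfold c. split. apply Rmin_pos; lra. split. apply Rmin_l. apply Rmin_r. }
      set (s0 := Rmin (del / 2) c).
      assert (Hs0 : 0 < s0 /\ s0 <= del / 2 /\ s0 <= c).
      { unfold s0. split. apply Rmin_pos; lra. split. apply Rmin_l. apply Rmin_r. }
      apply (Hgen s0); try lra. intros s Hs.
      assert (Hs2 : 0 < s ^ 2) by (apply pow_lt; lra).
      assert (HsX : s ^ 2 < X) by (simpl; nra).
      assert (HMX : M * X = H0 / 2) by (unfold X; field; lra).
      apply Rmult_lt_reg_r with (s ^ 2); auto.
      replace (H0 / 2 / s ^ 2 * s ^ 2) with (H0 / 2) by (field; lra).
      nra. }
  split; auto.
  destruct (P1 0) as [V0 [HV0 HI]]. exists V0. split; auto.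
  intros V HV. left. apply HI; auto.
Qed.
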